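(* Let $u_1,\ldots,u_m$ be a sequence of squarefree monomials of the same degree having linear quotient order. Then any proliferation of this sequence again has linear quotient order.
   Context: A sequence $u_1,\ldots,u_m$ of monomials of the same degree has linear quotient order if the ideal $(u_1,\ldots,u_{j-1}):u_j$ is generated by variables for every $j=2,\ldots,m$. Proliferation: fix a variable $x_i$ and new variables $x_{i1},\ldots,x_{ir}$. For each $j$ with $x_i\mid u_j$ set $u_{jk}=x_{ik}(u_j/x_i)$ for $k=1,\ldots,r$ (i.e. $x_i$ replaced by $x_{ik}$). The proliferation of $u_1,\ldots,u_m$ (with respect to $x_i$ and $x_{i1},\ldots,x_{ir}$) is the sequence obtained from $u_1,\ldots,u_m$ by replacing each $u_j$ divisible by $x_i$ with the consecutive block $u_{j1},\ldots,u_{jr}$, keeping the other $u_j$ unchanged and in place. *)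

(* Defs.v *)
(* Monomials in a polynomial ring k[x_v | v : V] over a finite
   set V of variables are represented by their exponent vectors. *)
From mathcomp Require Import all_boot.
Set Implicit Arguments. Unset Strict Implicit. Unset Printing Implicit Defensive.

Definition mon (V : finType) := {ffun V -> nat}.

Definition mmul (V : finType) (u w : mon V) : mon V := [ffun v => u v + w v].

Definition mdvd (V : finType) (u w : mon V) : bool := [forall v, u v <= w v].

Definition mdeg (V : finType) (u : mon V) : nat := \sum_(v : V) u v.

Definition squarefree (V : finType) (u : mon V) : bool := [forall v, u v <= 1].

Definition in_mideal (V : finType) (S : seq (mon V)) (w : mon V) : bool :=
  has (fun g => mdvd g w) S.

Definition in_colon (V : finType) (S : seq (mon V)) (u w : mon V) : bool :=
  in_mideal S (mmul w u).

(* (S) : u is generated by variables: there is a set X of variables such that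
   (S) : u = (x_v | v in X).  Both sides are monomial ideals, hence they are
   equal iff they contain the same monomials. *)
Definition colon_gen_by_vars (V : finType) (S : seq (mon V)) (u : mon V) : Prop :=
  exists X : {set V}, forall w : mon V,
    in_colon S u w = [exists v in X, 0 < w v].

(* linear quotient order: (u_1,...,u_{j-1}) : u_j generated by variables
   for j = 2..m (0-indexed: j = 1 .. size s - 1) *)
Definition linear_quotients (V : finType) (s : seq (mon V)) : Prop :=
  forall j, 0 < j < size s -> colon_gen_by_vars (take j s) (nth [ffun=> 0] s j).

Definition same_degree (V : finType) (s : seq (mon V)) : Prop :=
  forall u w, u \in s -> w \in s -> mdeg u = mdeg w.

(* Proliferation w.r.t. the variable x_i and new variables x_{i1},...,x_{ir}.
   The new polynomial ring has variables V + 'I_r: inl v is the old x_v,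
   inr k is the new variable x_{i,k+1}. *)
Definition membed (V : finType) (r : nat) (u : mon V) : mon (V + 'I_r)%type :=
  [ffun y => match y with inl v => u v | inr _ => 0 end].

(* u_{jk} = x_{ik} (u / x_i) *)
Definition mrepl (V : finType) (i : V) (r : nat) (u : mon V) (k : 'I_r)
  : mon (V + 'I_r)%type :=
  [ffun y => match y with
             | inl v => if v == i then (u v).-1 else u v
             | inr k' => if k' == k then 1 else 0
             end].

Definition proliferation (V : finType) (i : V) (r : nat) (s : seq (mon V))
  : seq (mon (V + 'I_r)%type) :=
  flatten [seq if 0 < u i then [seq mrepl i u k | k <- enum 'I_r]
               else [:: membed r u] | u : mon V <- s].

(* Main.v *)
Require Import Defs.
From mathcomp Require Import all_boot.
From mathcomp Require Import zify.

Lemma inlE (A B : eqType) (a b : A) : (inl a == inl b :> (A + B)%type) = (a == b).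
Proof. by []. Qed.
Lemma inrE (A B : eqType) (a b : B) : (inr a == inr b :> (A + B)%type) = (a == b).
Proof. by []. Qed.

Section Aux.
Variable V : finType.

Definition evar (y : V) : mon V := [ffun v => if v == y then 1 else 0].

Lemma in_colonP (S : seq (mon V)) (u w : mon V) :
  reflect (exists2 g : mon V, g \in S & forall v, g v <= w v + u v) (in_colon S u w).
Proof.
apply: (iffP hasP) => [[g Hg /forallP H]|[g Hg H]]; exists g => //.
  by move=> v; move: (H v); rewrite ffunE.
by apply/forallP => v; rewrite ffunE.
Qed.

Lemma colon_var (S : seq (mon V)) (u w : mon V) :
  colon_gen_by_vars S u -> in_colon S u w ->
  exists y, 0 < w y /\ in_colon S u (evar y).
Proof.
move=> [X HX]; rewrite HX => /existsP [y /andP [Hy Hw]].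
exists y; split => //; rewrite HX; apply/existsP; exists y.
by rewrite Hy ffunE eqxx.
Qed.

Variables (i : V) (r : nat).

Definition blk (u : mon V) : seq (mon (V + 'I_r)%type) :=
  if 0 < u i then [seq mrepl i u k | k <- enum 'I_r] else [:: membed r u].

Lemma prol_cons u s : proliferation i r (u :: s) = blk u ++ proliferation i r s.
Proof. by []. Qed.

Lemma mem_prol g s : g \in proliferation i r s -> exists2 u : mon V, u \in s & g \in blk u.
Proof. by move/flattenP => [b /mapP [u Hu ->] Hg]; exists u. Qed.

Lemma prol_mem g u s : u \in s -> g \in blk u -> g \in proliferation i r s.
Proof. by move=> Hu Hg; apply/flattenP; exists (blk u) => //; apply/mapP; exists u. Qed.

Definition Pr (u : mon V) (B : seq (mon (V + 'I_r)%type)) (w' : mon (V + 'I_r)%type) :=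
  (u i = 0 /\ B = [::] /\ w' = membed r u) \/
  (0 < u i /\ exists k, w' = mrepl i u k /\
     forall g : mon (V + 'I_r)%type, g \in B -> exists2 k' : 'I_r, k' != k & g = mrepl i u k').

Lemma decomp s j : j < size (proliferation i r s) ->
  exists p, p < size s /\ exists B,
    take j (proliferation i r s) = proliferation i r (take p s) ++ B /\
    Pr (nth [ffun=> 0] s p) B (nth [ffun=> 0] (proliferation i r s) j).
Proof.
elim: s j => [|u s IH] j //.
rewrite prol_cons size_cat => Hj.
case: (ltnP j (size (blk u))) => Hjb.
  exists 0; split => //; exists (take j (blk u)).
  rewrite take_cat Hjb nth_cat Hjb /=; split => //.
  rewrite /blk in Hjb *; case: ifP Hjb => Hui Hjb.
    right; split => //.
    rewrite size_map size_enum_ord in Hjb.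
    set k0 := Ordinal Hjb.
    exists (nth k0 (enum 'I_r) j); rewrite (nth_map k0) ?size_enum_ord //; split => //.
    move=> g; rewrite -map_take => /mapP [k' Hk' ->]; exists k' => //.
    have : uniq (take j (enum 'I_r) ++ nth k0 (enum 'I_r) j :: drop j.+1 (enum 'I_r)).
      by rewrite -drop_nth ?size_enum_ord // cat_take_drop enum_uniq.
    rewrite cat_uniq /= => /and3P [_ /norP [Hn _] _].
    by apply/eqP => E; rewrite -E Hk' in Hn.
  left; move/negbT: Hui; rewrite lt0n negbK => /eqP Hui.
  by case: j Hj Hjb.
have Hj' : j - size (blk u) < size (proliferation i r s) by lia.
have [p [Hp [B [HT HP]]]] := IH _ Hj'.
exists p.+1; split => //; exists B.
rewrite take_cat ltnNge Hjb /= HT prol_cons catA nth_cat ltnNge Hjb /=.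
by split.
Qed.

End Aux.
Arguments evar {V} y.
Arguments blk {V} i r u.
Arguments Pr {V} i r u B w'.
Arguments in_colonP {V S u w}.
Arguments colon_var {V S u w}.

Theorem lemma5p1 (V : finType) (s : seq (mon V)) (i : V) (r : nat) :
  0 < r ->
  (forall u, u \in s -> squarefree u) ->
  same_degree s ->
  linear_quotients s ->
  linear_quotients (proliferation i r s).
Proof.
move=> r0 Hsq _ Hlq j /andP [Hj0 Hj].
have [p [Hp [B [HT HP]]]] := @decomp V i r s j Hj.
rewrite /colon_gen_by_vars HT.
have Hcol : 0 < p -> colon_gen_by_vars (take p s) (nth [ffun=> 0] s p).
  by move=> Hp0; apply: Hlq; rewrite Hp0 Hp.
have Hsqv : forall (u : mon V) v, u \in s -> u v <= 1.
  by move=> u v /Hsq /forallP.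
move: HP Hcol; move: (nth _ (proliferation i r s) j) => w'.
move: (nth _ s p) => up HP Hcol.
set P := proliferation i r (take p s) ++ B.
exists [set y | in_colon P w' (evar y)] => w.
apply/idP/idP; last first.
  move/existsP => [y /andP [Hy Hwy]]; rewrite inE in Hy.
  move/in_colonP: Hy => [g Hg Hgd]; apply/in_colonP; exists g => // v.
  by move: (Hgd v); rewrite /evar ffunE; case: eqP => [->|]; lia.
move/in_colonP => [g Hg Hgd].
suff [y [H1 H2]] : exists y, 0 < w y /\ in_colon P w' (evar y).
  by apply/existsP; exists y; rewrite inE H1 H2.
rewrite /P mem_cat in Hg; case/orP: Hg => Hg; last first.
  case: HP => [[_ [HB _]]|[Hui [k [Hw' HB]]]]; first by rewrite HB in Hg.
  have [k' Hk' Eg] := HB g Hg.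
  exists (inr k'); split.
    by move: (Hgd (inr k')); rewrite Eg Hw' /mrepl !ffunE eqxx (negbTE Hk'); lia.
  apply/in_colonP; exists g; first by rewrite /P mem_cat Hg orbT.
  case=> [v|k3]; rewrite Eg Hw' /evar /mrepl !ffunE //= ?inlE ?inrE.
  by case: (k3 =P k'); case: (k3 =P k); lia.
have [uq Huq Hgb] := @mem_prol V i r g _ Hg.
have Hp0 : 0 < p by move: Huq; case: (p) => //; rewrite take0.
have Huqs : uq \in s := mem_take Huq.
have [y0 [Hy0 /in_colonP [uq' Huq' Hd']]] :
    exists y, 0 < [ffun v => uq v - up v] y /\ in_colon (take p s) up (evar y).
  apply: colon_var; first exact: Hcol.
  by apply/in_colonP; exists uq => // v; rewrite ffunE; lia.
rewrite ffunE in Hy0.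
have Huq's : uq' \in s := mem_take Huq'.
have HinP : forall g', g' \in blk i r uq' -> g' \in P.
  by move=> g' Hg'; rewrite /P mem_cat (@prol_mem V i r g' _ _ Huq' Hg').
case: (eqVneq y0 i) => [Ey|Ny].
- subst y0.
  have Hqi := Hsqv uq i Huqs.
  have Hupi : up i = 0 by lia.
  have Huqi : uq i = 1 by lia.
  case: HP => [[_ [_ Hw']]|[Hui _]]; last by lia.
  move: Hgb; rewrite /blk Huqi /= => /mapP [k'' _ Eg].
  exists (inr k''); split.
    by move: (Hgd (inr k'')); rewrite Eg Hw' /mrepl /membed !ffunE eqxx addn0.
  apply/in_colonP.
  case: (posnP (uq' i)) => Hq'.
    exists (membed r uq'); first by apply: HinP; rewrite /blk Hq' ltnn mem_seq1.
    case=> [v|k3]; rewrite Hw' /evar /membed !ffunE //= ?inlE ?inrE.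
    by move: (Hd' v); rewrite /evar ffunE; case: (v =P i) => [->|] //; rewrite Hq'.
  exists (mrepl i uq' k'').
    by apply: HinP; rewrite /blk Hq'; apply/mapP; exists k''; rewrite ?mem_enum.
  case=> [v|k3]; rewrite Hw' /evar /membed /mrepl !ffunE //= ?inlE ?inrE.
    by move: (Hd' v); rewrite /evar ffunE; case: (v =P i) => [->|]; lia.
  by case: (k3 =P k''); lia.
- exists (inl y0); split.
    move: (Hgd (inl y0)).
    have Eg : g (inl y0) = uq y0.
      move: Hgb; rewrite /blk; case: ifP => _.
        by move=> /mapP [k'' _ ->]; rewrite /mrepl ffunE (negbTE Ny).
      by rewrite mem_seq1 => /eqP ->; rewrite /membed ffunE.
    have Ew : w' (inl y0) = up y0.
      case: HP => [[_ [_ ->]]|[_ [k [-> _]]]]; rewrite ?/membed /mrepl ffunE //.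
      by rewrite (negbTE Ny).
    rewrite Eg Ew; lia.
  apply/in_colonP.
  case: (posnP (uq' i)) => Hq'.
    exists (membed r uq'); first by apply: HinP; rewrite /blk Hq' ltnn mem_seq1.
    case=> [v|k3]; rewrite /evar /membed !ffunE //= ?inlE ?inrE.
    case: (v =P i) => [->|Nv]; first by rewrite Hq'.
    have Ew : w' (inl v) = up v.
      case: HP => [[_ [_ ->]]|[_ [k [-> _]]]]; rewrite ?/membed /mrepl ffunE //.
      by case: (v =P i).
    by rewrite Ew; move: (Hd' v); rewrite /evar ffunE.
  have Hupi : 0 < up i.
    by move: (Hd' i); rewrite /evar ffunE eq_sym (negbTE Ny); lia.
  case: HP => [[Hui _]|[_ [k [Hw' _]]]]; first by lia.
  exists (mrepl i uq' k).
    by apply: HinP; rewrite /blk Hq'; apply/mapP; exists k; rewrite ?mem_enum.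
  case=> [v|k3]; rewrite Hw' /evar /mrepl !ffunE //= ?inlE ?inrE.
  move: (Hd' v); rewrite /evar ffunE.
  move: (Hd' v); rewrite /evar ffunE.
  case: (v =P i) => [->|_]; first by rewrite eq_sym (negbTE Ny); lia.
  by case: (v == y0); lia.
Qed.
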